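(* Let $u, v_1, \ldots, v_n \in \mathcal{L}_s$. Then $u \leqslant_{\mathcal{L}} \max(v_1, \ldots, v_n)$ if and only if there exists $i$ such that $u \leqslant_{\mathcal{L}} v_i$.
   Context: $\mathcal{X}$ is a countable set of variables; a valuation is $\sigma\colon\mathcal{X}\to\mathbb{N}$. For finite $E\subseteq\mathcal{X}$, $x\in\mathcal{X}$, $S\in\mathbb{N}$, the sublevels $A(E,x,S)$ and $B(E,S)$ have values $[A(E,x,S)]_\sigma = 0$ if some $y\in E$ has $\sigma(y)=0$, and $\sigma(x)+S$ otherwise; $[B(E,S)]_\sigma=0$ if some $y\in E$ has $\sigma(y)=0$, and $S$ otherwise. $\mathcal{L}_s$ is the set of sublevels $A(E,x,S)$ with $x\in E$ and $B(E,S)$ with $S>0$. $\max$ of a finite family is evaluated pointwise (empty max has value $0$). $t_1\leqslant_{\mathcal{L}} t_2$ means $[t_1]_\sigma\le[t_2]_\sigma$ for every valuation $\sigma$. *)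

(* Defs.v *)
From mathcomp Require Import all_boot.
Set Implicit Arguments. Unset Strict Implicit. Unset Printing Implicit Defensive.

(* Variables: the countably infinite set X is represented by nat.
   Finite sets E of variables are represented by finite sequences (only
   membership matters). A valuation is sigma : nat -> nat. *)
Definition var := nat.
Definition valuation := var -> nat.

Inductive sublevel : Type :=
| SA (E : seq var) (x : var) (S : nat)
| SB (E : seq var) (S : nat).

Definition vanishes (sigma : valuation) (E : seq var) : bool :=
  has (fun y => sigma y == 0) E.

Definition eval (sigma : valuation) (t : sublevel) : nat :=
  match t with
  | SA E x s => if vanishes sigma E then 0 else sigma x + s
  | SB E s => if vanishes sigma E then 0 else s
  end.

Definition in_Ls (t : sublevel) : Prop :=
  match t with
  | SA E x _ => x \in E
  | SB _ s => 0 < s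
  end.

(* pointwise max of a finite family v_0..v_{n-1}; empty max is 0 *)
Definition eval_max (sigma : valuation) (n : nat) (v : 'I_n -> sublevel) : nat :=
  \max_(i < n) eval sigma (v i).

Definition leL (t1 t2 : sublevel) : Prop :=
  forall sigma : valuation, eval sigma t1 <= eval sigma t2.

Definition leL_max (u : sublevel) (n : nat) (v : 'I_n -> sublevel) : Prop :=
  forall sigma : valuation, eval sigma u <= eval_max sigma v.

(* Main.v *)
Require Import Defs.
From mathcomp Require Import all_boot zify.

Lemma sub_nvan s (E1 E2 : seq var) : {subset E1 <= E2} ->
  ~~ vanishes s E2 -> ~~ vanishes s E1.
Proof.
move=> sub; apply: contra => /hasP [y yE1 y0]; apply/hasP; exists y => //.
exact: sub.
Qed.

Lemma subset_of s (E E1 : seq var) : (forall y, y \notin E -> s y = 0) ->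
  ~~ vanishes s E1 -> {subset E1 <= E}.
Proof.
move=> H nv y yE1; apply/negPn/negP => yn; move/negP: nv; apply.
by apply/hasP; exists y => //; rewrite H.
Qed.

Lemma max_ex n (F : 'I_n -> nat) k : 0 < k -> k <= \max_(i < n) F i ->
  exists i, k <= F i.
Proof.
move=> k0 hk; case: (boolP [exists i, k <= F i]) => [/existsP//|/existsPn H].
have : \max_(i < n) F i <= k.-1.
  by apply/bigmax_leqP => i _; rewrite -ltnS prednK // ltnNge H.
by rewrite -ltnS prednK // ltnNge hk.
Qed.

Theorem lemma36 (u : sublevel) (n : nat) (v : 'I_n -> sublevel) :
  in_Ls u -> (forall i : 'I_n, in_Ls (v i)) ->
  (leL_max u v <-> exists i : 'I_n, leL u (v i)).
Proof.
move=> hu hv; split; last first.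
  move=> [i hi] s; apply: leq_trans (hi s) _; rewrite /eval_max.
  exact: (leq_bigmax (F := fun i => eval s (v i))).
move=> H.
case: u hu H => [E x S|E S] /= hu H.
- set N := (\max_(i < n) match v i with SA _ _ t => t | SB _ t => t end).+2.
  pose s := fun y : var => if y == x then N else if y \in E then 1 else 0.
  have hs : forall y, y \notin E -> s y = 0.
    move=> y yn; rewrite /s; case: eqP => [e|_]; last by rewrite (negbTE yn).
    by subst y; rewrite hu in yn.
  have nvE : ~~ vanishes s E.
    apply/hasPn => y yE; rewrite /s /N; by case: (y == x); rewrite ?yE.
  have := H s; rewrite /eval (negbTE nvE) /eval_max => /max_ex [] //; first by rewrite /s eqxx addn_gt0.
  move=> i; have bnd : (match v i with SA _ _ t => t | SB _ t => t end).+2 <= N.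
    rewrite /N !ltnS. 
    exact: (leq_bigmax (F := fun i => match v i with SA _ _ t => t | SB _ t => t end)).
  have := hv i; case Evi: (v i) bnd => [Ei xi Si|Ei Si] /= bnd hvi.
  + case nv: (vanishes s Ei) => /= hle; first by move: hle; rewrite /s eqxx /N; lia.
    have sub := @subset_of _ _ _ hs (negbT nv).
    have ex : xi = x.
      apply/eqP; move: hle; rewrite /s eqxx; case: eqP => // _.
      rewrite (sub _ hvi); lia.
    subst xi.
    have hS : S <= Si by move: hle; rewrite /s eqxx; lia.
    exists i => s'; rewrite Evi /=; case nv': (vanishes s' E) => //.
    by rewrite (negbTE (@sub_nvan _ _ _ sub (negbT nv'))) leq_add2l.
  + case nv: (vanishes s Ei) => /= hle; first by move: hle; rewrite /s eqxx /N; lia.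
    move: hle; rewrite /s eqxx; lia.
- pose s := fun y : var => if y \in E then 1 else 0.
  have hs : forall y, y \notin E -> s y = 0 by move=> y yn; rewrite /s (negbTE yn).
  have nvE : ~~ vanishes s E by apply/hasPn => y yE; rewrite /s yE.
  have := H s; rewrite /eval (negbTE nvE) /eval_max => /max_ex [] // i.
  have := hv i; case Evi: (v i) => [Ei xi Si|Ei Si] /= hvi;
    (case nv: (vanishes s Ei) => /= hle; first by move: hle hu; clear; lia);
    have sub := @subset_of _ _ _ hs (negbT nv); exists i => s'; rewrite Evi /=;
    case nv': (vanishes s' E) => //;
    rewrite (negbTE (@sub_nvan _ _ _ sub (negbT nv'))) //.
  move: hle; rewrite /s (sub _ hvi).
  have : s' xi != 0.
    by apply/negP => /eqP h0; move/negP: nv'; apply; apply/hasP; exists xi; rewrite ?(sub _ hvi) ?h0.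
  lia.
Qed.
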